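(* Let $k\geq3$ be an integer and let $0\leq a<\frac1k$ and $\frac{k-1}{k}<b\leq 1$. Then: (a) $\mathcal{W}_k(a,b)\subseteq C_k$; (b) $g_k^{-1}\big(\mathcal{W}_2(g_k(a),g_k(b))\big)\cap B_k=\emptyset$; (c) $\mathcal{W}_k(a,b)=C_k\cap g_k^{-1}\big(\mathcal{W}_2(g_k(a),g_k(b))\big)$.
   Context: For an integer $m\geq2$, $T_m:[0,1)\to[0,1)$ is $T_m(x)=mx\bmod1$, and for $0\leq c<e\leq1$, $\mathcal{W}_m(c,e)=\{x\in[0,1)\ :\ T_m^n(x)\notin(c,e)\ \forall n\geq0\}$. $B_k=\{\ell/k^n\ :\ n\geq1,\ 1\leq\ell\leq k^n-1\}$. $C_k$ is the set of $x\in[0,1]$ admitting an expansion $x=\sum_{n\geq1}a_nk^{-n}$ with all $a_n\in\{0,k-1\}$. The function $g_k:[0,1]\to[0,1]$ is defined as follows: write $x=\sum_{n\geq1}a_nk^{-n}$ with $a_n\in\{0,1,\dots,k-1\}$; if $N\geq1$ is the least index with $a_N\notin\{0,k-1\}$, set $g_k(x)=\sum_{n=1}^{N-1}\frac{a_n}{(k-1)2^n}+\frac{1}{2^N}$; if all $a_n\in\{0,k-1\}$, set $g_k(x)=\sum_{n\geq1}\frac{a_n}{(k-1)2^n}$ (independent of the choice of expansion). Preimages $g_k^{-1}$ are taken in $[0,1]$. *)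

(* Defs.v *)
From Stdlib Require Import Reals Lra Lia ClassicalEpsilon.
Open Scope R_scope.

Definition T (m : nat) (x : R) : R := frac_part (INR m * x).

Definition Wset (m : nat) (c e : R) (x : R) : Prop :=
  0 <= x < 1 /\ forall n : nat, ~ (c < Nat.iter n (T m) x < e).

Definition Bset (k : nat) (x : R) : Prop :=
  exists n l : nat, (1 <= n)%nat /\ (1 <= l)%nat /\ (l <= k ^ n - 1)%nat /\
    x = INR l / INR k ^ n.

(* a : nat -> nat is a base-k expansion of x: digits a 1, a 2, ... in {0..k-1}
   (a 0 is ignored) and x = sum_{n>=1} a_n k^{-n}. *)
Definition is_expansion (k : nat) (a : nat -> nat) (x : R) : Prop :=
  (forall n, (1 <= n)%nat -> (a n < k)%nat) /\
  infinite_sum (fun i => INR (a (S i)) / INR k ^ (S i)) x.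

Definition extreme_digit (k d : nat) : Prop := d = 0%nat \/ d = (k - 1)%nat.

Definition Cset (k : nat) (x : R) : Prop :=
  0 <= x <= 1 /\
  exists a, is_expansion k a x /\ forall n, (1 <= n)%nat -> extreme_digit k (a n).

Fixpoint psum (f : nat -> R) (n : nat) : R :=
  match n with O => 0 | S p => psum f p + f (S p) end.

Definition g_val (k : nat) (a : nat -> nat) (y : R) : Prop :=
  (exists N : nat, (1 <= N)%nat /\ ~ extreme_digit k (a N) /\
     (forall n, (1 <= n < N)%nat -> extreme_digit k (a n)) /\
     y = psum (fun n => INR (a n) / (INR (k - 1) * 2 ^ n)) (N - 1) + / 2 ^ N)
  \/
  ((forall n, (1 <= n)%nat -> extreme_digit k (a n)) /\
   infinite_sum (fun i => INR (a (S i)) / (INR (k - 1) * 2 ^ (S i))) y).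

(* g_k x: the value given by (any) expansion of x in [0,1]; the paper asserts
   independence of the expansion. Outside [0,1] the value is irrelevant. *)
Definition g (k : nat) (x : R) : R :=
  epsilon (inhabits 0) (fun y => exists a, is_expansion k a x /\ g_val k a y).

(* Main.v *)
Require Import Defs.
From Stdlib Require Import Reals Lra Lia ClassicalEpsilon Classical.
Open Scope R_scope.


Definition dsum (B : nat) (f : nat -> nat) (n : nat) : R :=
  psum (fun i => INR (f i) / INR B ^ i) n.
Definition is_dexp (B : nat) (f : nat -> nat) (l : R) : Prop :=
  infinite_sum (fun i => INR (f (S i)) / INR B ^ (S i)) l.
Definition dig (B : nat) (f : nat -> nat) : Prop :=
  forall i, (1 <= i)%nat -> (f i < B)%nat.
Definition shift (f : nat -> nat) (n : nat) : nat -> nat := fun i => f (i + n)%nat.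
Definition tail (B : nat) (f : nat -> nat) (l : R) (n : nat) : R :=
  INR B ^ n * (l - dsum B f n).

Lemma sum_dsum B f m :
  sum_f_R0 (fun i => INR (f (S i)) / INR B ^ (S i)) m = dsum B f (S m).
Proof.
  induction m.
  - unfold dsum. simpl. ring.
  - transitivity (sum_f_R0 (fun i => INR (f (S i)) / INR B ^ (S i)) m
       + INR (f (S (S m))) / INR B ^ (S (S m))); [reflexivity|].
    rewrite IHm. reflexivity.
Qed.

Lemma dsum_S B f n : dsum B f (S n) = dsum B f n + INR (f (S n)) / INR B ^ (S n).
Proof. reflexivity. Qed.

Lemma dsum_0 B f : dsum B f 0 = 0.
Proof. reflexivity. Qed.

Lemma dig_le (a B : nat) : (a < B)%nat -> INR a <= INR B - 1.
Proof. intro H. apply le_INR in H. rewrite S_INR in H. lra. Qed.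

Lemma INRB_gt1 B : (2 <= B)%nat -> 1 < INR B.
Proof. intro H. apply le_INR in H. simpl in H. lra. Qed.

Lemma powB_pos B n : (2 <= B)%nat -> 0 < INR B ^ n.
Proof. intro H. apply pow_lt. pose proof (INRB_gt1 B H). lra. Qed.

Lemma term_le B a m : (2 <= B)%nat -> (a < B)%nat ->
  0 <= INR a / INR B ^ (S m) <= / INR B ^ m - / INR B ^ (S m).
Proof.
  intros HB Ha. pose proof (INRB_gt1 B HB) as Hr. pose proof (powB_pos B m HB) as Hp.
  pose proof (dig_le a B Ha) as Hd. pose proof (pos_INR a).
  simpl. set (p := INR B ^ m) in *. set (r := INR B) in *.
  assert (E : / p - / (r * p) = (r - 1) / (r * p)) by (field; lra).
  rewrite E. split.
  - unfold Rdiv. apply Rmult_le_pos; [lra|]. left. apply Rinv_0_lt_compat. nra.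
  - unfold Rdiv. apply Rmult_le_compat_r; [left; apply Rinv_0_lt_compat; nra | lra].
Qed.

Lemma dsum_bound B f n m : (2 <= B)%nat -> dig B f -> (n <= m)%nat ->
  dsum B f n <= dsum B f m <= dsum B f n + / INR B ^ n - / INR B ^ m.
Proof.
  intros HB Hf Hnm. induction Hnm.
  - lra.
  - rewrite dsum_S. pose proof (term_le B (f (S m)) m HB (Hf (S m) ltac:(lia))). lra.
Qed.

Lemma lim_le s l N M : infinite_sum s l ->
  (forall n, (n >= N)%nat -> sum_f_R0 s n <= M) -> l <= M.
Proof.
  intros Hs H. destruct (Rle_or_lt l M) as [|Hlt]; auto.
  destruct (Hs (l - M)) as [K HK]; [lra|].
  specialize (HK (max K N) (Nat.le_max_l _ _)). specialize (H (max K N) (Nat.le_max_r _ _)).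
  unfold Rdist in HK. apply Rabs_def2 in HK. lra.
Qed.

Lemma lim_ge s l N M : infinite_sum s l ->
  (forall n, (n >= N)%nat -> M <= sum_f_R0 s n) -> M <= l.
Proof.
  intros Hs H. destruct (Rle_or_lt M l) as [|Hlt]; auto.
  destruct (Hs (M - l)) as [K HK]; [lra|].
  specialize (HK (max K N) (Nat.le_max_l _ _)). specialize (H (max K N) (Nat.le_max_r _ _)).
  unfold Rdist in HK. apply Rabs_def2 in HK. lra.
Qed.

Lemma dexp_bounds B f l : (2 <= B)%nat -> dig B f -> is_dexp B f l ->
  forall n, dsum B f n <= l <= dsum B f n + / INR B ^ n.
Proof.
  intros HB Hf Hl n. split.
  - apply (lim_ge _ _ n _ Hl). intros m Hm. rewrite sum_dsum.
    pose proof (dsum_bound B f n (S m) HB Hf ltac:(lia)). lra.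
  - apply (lim_le _ _ n _ Hl). intros m Hm. rewrite sum_dsum.
    pose proof (dsum_bound B f n (S m) HB Hf ltac:(lia)).
    pose proof (powB_pos B (S m) HB). assert (0 < / INR B ^ S m) by (apply Rinv_0_lt_compat; lra). lra.
Qed.

Lemma small_pow B eps : (2 <= B)%nat -> 0 < eps -> exists K, forall n, (n >= K)%nat -> / INR B ^ n < eps.
Proof.
  intros HB He. pose proof (INRB_gt1 B HB).
  destruct (pow_lt_1_zero (/ INR B)) with (y := eps) as [K HK]; auto.
  - rewrite Rabs_right. apply (Rmult_lt_reg_l (INR B)); [lra|]. rewrite Rinv_r; lra.
    left; apply Rinv_0_lt_compat; lra.
  - exists K. intros n Hn. specialize (HK n Hn). rewrite pow_inv in HK.
    rewrite Rabs_right in HK; auto. left. apply Rinv_0_lt_compat. apply powB_pos; auto.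
Qed.

Lemma dexp_of_bounds B f l : (2 <= B)%nat ->
  (forall n, dsum B f n <= l <= dsum B f n + / INR B ^ n) -> is_dexp B f l.
Proof.
  intros HB H eps Heps. destruct (small_pow B eps HB Heps) as [K HK].
  exists K. intros n Hn. rewrite sum_dsum. unfold Rdist. specialize (H (S n)).
  specialize (HK (S n) ltac:(lia)). apply Rabs_def1; lra.
Qed.

Lemma arch_ge B c l : (2 <= B)%nat -> (forall n, c - / INR B ^ n <= l) -> c <= l.
Proof.
  intros HB H. destruct (Rle_or_lt c l) as [|Hlt]; auto.
  destruct (small_pow B (c - l) HB) as [K HK]; [lra|]. specialize (HK K (le_n K)).
  specialize (H K). lra.
Qed.

Lemma arch_le B c l : (2 <= B)%nat -> (forall n, l <= c + / INR B ^ n) -> l <= c.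
Proof.
  intros HB H. destruct (Rle_or_lt l c) as [|Hlt]; auto.
  destruct (small_pow B (l - c) HB) as [K HK]; [lra|]. specialize (HK K (le_n K)).
  specialize (H K). lra.
Qed.

Lemma dsum_shift B f n m : (2 <= B)%nat ->
  dsum B (shift f n) m = INR B ^ n * (dsum B f (n + m) - dsum B f n).
Proof.
  intro HB. pose proof (INRB_gt1 B HB). induction m.
  - rewrite Nat.add_0_r, dsum_0. ring.
  - rewrite dsum_S, IHm, Nat.add_succ_r, dsum_S. unfold shift.
    replace (S m + n)%nat with (S (n + m)) by lia.
    replace (S (n + m)) with (n + S m)%nat by lia. rewrite pow_add.
    field. split; apply pow_nonzero; lra.
Qed.

Lemma dig_shift B f n : dig B f -> dig B (shift f n).
Proof. intros H i Hi. unfold shift. apply H. lia. Qed.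

Lemma dexp_shift B f l n : (2 <= B)%nat -> dig B f -> is_dexp B f l ->
  is_dexp B (shift f n) (tail B f l n).
Proof.
  intros HB Hf Hl. apply dexp_of_bounds; auto. intro m.
  rewrite dsum_shift by auto. unfold tail.
  pose proof (dexp_bounds B f l HB Hf Hl (n + m)) as [H1 H2].
  pose proof (powB_pos B n HB). pose proof (powB_pos B m HB).
  rewrite pow_add in H2.
  split.
  - apply Rmult_le_compat_l; lra.
  - assert (E : INR B ^ n * (dsum B f (n + m) - dsum B f n) + / INR B ^ m =
      INR B ^ n * (dsum B f (n + m) + / (INR B ^ n * INR B ^ m) - dsum B f n)) by (field; lra).
    rewrite E. apply Rmult_le_compat_l; lra.
Qed.

Lemma tail_rel B f l n : (2 <= B)%nat -> l = dsum B f n + tail B f l n / INR B ^ n.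
Proof. intro HB. pose proof (powB_pos B n HB). unfold tail. field. lra. Qed.

Lemma tail_bounds B f l n : (2 <= B)%nat -> dig B f -> is_dexp B f l ->
  0 <= tail B f l n <= 1.
Proof.
  intros HB Hf Hl. pose proof (dexp_bounds B (shift f n) _ HB (dig_shift B f n Hf) (dexp_shift B f l n HB Hf Hl) 0).
  rewrite dsum_0 in H. simpl in H. lra.
Qed.

Lemma dexp_exists B f : (2 <= B)%nat -> dig B f -> exists l, is_dexp B f l.
Proof.
  intros HB Hf.
  destruct (growing_cv (fun m => sum_f_R0 (fun i => INR (f (S i)) / INR B ^ (S i)) m)) as [l Hl].
  - intro m. rewrite !sum_dsum. pose proof (dsum_bound B f (S m) (S (S m)) HB Hf ltac:(lia)). lra.
  - exists 1. intros x [i ->]. rewrite sum_dsum.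
    pose proof (dsum_bound B f 0 (S i) HB Hf ltac:(lia)). rewrite dsum_0, pow_O, Rinv_1 in H.
    pose proof (powB_pos B (S i) HB). assert (0 < / INR B ^ S i) by (apply Rinv_0_lt_compat; lra). lra.
  - exists l. exact Hl.
Qed.

Lemma dexp_unique B f l1 l2 : is_dexp B f l1 -> is_dexp B f l2 -> l1 = l2.
Proof. apply uniqueness_sum. Qed.

Lemma dsum_allmax B f n : (2 <= B)%nat -> (forall i, (1 <= i)%nat -> f i = (B - 1)%nat) ->
  dsum B f n = 1 - / INR B ^ n.
Proof.
  intros HB Hf. pose proof (INRB_gt1 B HB). induction n.
  - rewrite dsum_0, pow_O, Rinv_1. ring.
  - rewrite dsum_S, IHn, Hf by lia. rewrite minus_INR by lia. change (INR 1) with 1.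
    rewrite <- tech_pow_Rmult. field. split; [apply pow_nonzero|]; lra.
Qed.

Lemma dexp_allmax B f l : (2 <= B)%nat -> (forall i, (1 <= i)%nat -> f i = (B - 1)%nat) ->
  is_dexp B f l -> l = 1.
Proof.
  intros HB Hf Hl. assert (Hd : dig B f) by (intros i Hi; rewrite Hf; lia).
  pose proof (dexp_bounds B f l HB Hd Hl) as H.
  apply Rle_antisym.
  - specialize (H 0%nat). rewrite dsum_0 in H. simpl in H. lra.
  - apply (arch_ge B); auto. intro n. specialize (H n). rewrite dsum_allmax in H; auto. lra.
Qed.

Lemma dexp_allmax_ex B f : (2 <= B)%nat -> (forall i, (1 <= i)%nat -> f i = (B - 1)%nat) ->
  is_dexp B f 1.
Proof.
  intros HB Hf. apply dexp_of_bounds; auto. intro n. rewrite dsum_allmax; auto.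
  pose proof (powB_pos B n HB). assert (0 < / INR B ^ n) by (apply Rinv_0_lt_compat; lra). lra.
Qed.

Lemma dsum_allzero B f n : (forall i, (1 <= i)%nat -> f i = 0%nat) -> dsum B f n = 0.
Proof.
  intros Hf. induction n.
  - reflexivity.
  - rewrite dsum_S, IHn, Hf by lia. simpl INR. unfold Rdiv. ring.
Qed.

Lemma dexp_allzero B f l : (2 <= B)%nat -> (forall i, (1 <= i)%nat -> f i = 0%nat) ->
  is_dexp B f l -> l = 0.
Proof.
  intros HB Hf Hl. assert (Hd : dig B f) by (intros i Hi; rewrite Hf; lia).
  pose proof (dexp_bounds B f l HB Hd Hl) as H.
  apply Rle_antisym.
  - apply (arch_le B); auto. intro n. specialize (H n). rewrite dsum_allzero in H; auto. lra.
  - specialize (H 0%nat). rewrite dsum_0 in H. lra.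
Qed.

Lemma dexp_zero_lt1 B f l j : (2 <= B)%nat -> dig B f -> (1 <= j)%nat -> f j = 0%nat ->
  is_dexp B f l -> l < 1.
Proof.
  intros HB Hf Hj Hz Hl. destruct j as [|j]; [lia|].
  pose proof (dexp_bounds B f l HB Hf Hl (S j)) as [_ H].
  rewrite dsum_S, Hz in H. simpl INR in H.
  pose proof (dsum_bound B f 0 j HB Hf ltac:(lia)) as [_ H2]. rewrite dsum_0 in H2.
  simpl pow in *. pose proof (INRB_gt1 B HB). pose proof (powB_pos B j HB).
  assert (/ (INR B * INR B ^ j) < / INR B ^ j).
  { apply Rinv_0_lt_contravar; nra. }
  unfold Rdiv in H. rewrite Rmult_0_l in H. lra.
Qed.

Lemma dexp_nz_pos B f l j : (2 <= B)%nat -> dig B f -> (1 <= j)%nat -> (1 <= f j)%nat ->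
  is_dexp B f l -> 0 < l.
Proof.
  intros HB Hf Hj Hz Hl. destruct j as [|j]; [lia|].
  pose proof (dexp_bounds B f l HB Hf Hl (S j)) as [H _].
  rewrite dsum_S in H.
  pose proof (dsum_bound B f 0 j HB Hf ltac:(lia)) as [H2 _]. rewrite dsum_0 in H2.
  pose proof (powB_pos B (S j) HB). apply le_INR in Hz. simpl in Hz.
  assert (0 < INR (f (S j)) / INR B ^ S j) by (apply Rdiv_lt_0_compat; lra). lra.
Qed.

Lemma dsum_nat B f n : (2 <= B)%nat -> exists m, dsum B f n = INR m / INR B ^ n.
Proof.
  intro HB. pose proof (INRB_gt1 B HB). induction n.
  - exists 0%nat. simpl. unfold dsum. simpl. field.
  - destruct IHn as [m Hm]. exists (m * B + f (S n))%nat.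
    rewrite dsum_S, Hm, plus_INR, mult_INR. simpl pow. field. split; [apply pow_nonzero|]; lra.
Qed.

Lemma frac_plus (y : R) (m : nat) : 0 <= y < 1 -> frac_part (y + INR m) = y.
Proof.
  intros Hy. unfold frac_part, Int_part.
  assert (Hu : (Z.of_nat m + 1)%Z = up (y + INR m)).
  { apply tech_up; rewrite plus_IZR, <- INR_IZR_INZ; simpl; lra. }
  rewrite <- Hu. rewrite minus_IZR, plus_IZR, <- INR_IZR_INZ. simpl. ring.
Qed.

Lemma dexp_orbit B f l : (2 <= B)%nat -> dig B f -> is_dexp B f l ->
  (forall n, tail B f l n < 1) -> forall n, Nat.iter n (T B) l = tail B f l n.
Proof.
  intros HB Hf Hl Ht n. pose proof (INRB_gt1 B HB). induction n.
  - unfold tail. simpl. rewrite dsum_0. ring.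
  - simpl. rewrite IHn. unfold T.
    assert (E : INR B * tail B f l n = tail B f l (S n) + INR (f (S n))).
    { unfold tail. rewrite dsum_S. simpl pow. field. split; [apply pow_nonzero|]; lra. }
    rewrite E. apply frac_plus. split; [|apply Ht].
    apply (tail_bounds B f l (S n) HB Hf Hl).
Qed.

Lemma INR2 : INR 2 = 2.
Proof. simpl. ring. Qed.

Lemma dyadic_half j : forall m, 0 < INR m / 2 ^ j < 1 ->
  exists n, Nat.iter n (T 2) (INR m / 2 ^ j) = 1 / 2.
Proof.
  induction j; intros m Hm.
  - simpl in Hm. destruct m; [simpl in Hm; lra|]. rewrite S_INR in Hm.
    pose proof (pos_INR m). lra.
  - assert (Hp : 0 < 2 ^ j) by (apply pow_lt; lra).
    assert (Hpj : INR (2 ^ j) = 2 ^ j) by (rewrite pow_INR; simpl; f_equal; ring).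
    assert (HT : forall y, T 2 (y / 2 ^ S j) = frac_part (y / 2 ^ j)).
    { intro y. unfold T. f_equal. rewrite INR2. simpl. field. lra. }
    simpl pow in Hm.
    destruct (Nat.lt_total m (2 ^ j)) as [Hlt|[Heq|Hgt]]. 
    + destruct (IHj m) as [n Hn].
      { apply lt_INR in Hlt. rewrite Hpj in Hlt. split.
        - apply Rdiv_lt_0_compat; [|lra]. destruct Hm as [Hm _].
          apply (Rmult_lt_compat_r (2 * 2 ^ j)) in Hm; [|lra]. unfold Rdiv in Hm.
          rewrite Rmult_0_l, Rmult_assoc, Rinv_l in Hm by lra. lra.
        - apply (Rmult_lt_reg_r (2 ^ j)); auto. unfold Rdiv. rewrite Rmult_assoc, Rinv_l; lra. }
      exists (S n). rewrite Nat.iter_succ_r, HT.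
      replace (INR m / 2 ^ j) with (INR m / 2 ^ j + INR 0) by (simpl; ring).
      rewrite frac_plus.
      * exact Hn.
      * apply lt_INR in Hlt. rewrite Hpj in Hlt. split.
        -- apply Rmult_le_pos; [apply pos_INR|]. left; apply Rinv_0_lt_compat; lra.
        -- apply (Rmult_lt_reg_r (2 ^ j)); auto. unfold Rdiv. rewrite Rmult_assoc, Rinv_l; lra.
    + exists 0%nat. simpl. subst m. rewrite Hpj. field. lra.
    + assert (Hm' : (m - 2 ^ j < 2 ^ j)%nat).
      { destruct Hm as [_ Hm]. assert (INR m < 2 * 2 ^ j).
        { apply (Rmult_lt_reg_r (/ (2 * 2 ^ j))). apply Rinv_0_lt_compat; lra.
          rewrite Rinv_r by lra. exact Hm. }
        rewrite <- Hpj in H. replace 2 with (INR 2) in H by apply INR2.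
        rewrite <- mult_INR in H. apply INR_lt in H. simpl in H. lia. }
      assert (HmI : INR (m - 2 ^ j) = INR m - 2 ^ j) by (rewrite minus_INR by lia; rewrite Hpj; ring).
      assert (Hpos : (0 < m - 2 ^ j)%nat) by lia.
      destruct (IHj (m - 2 ^ j)%nat) as [n Hn].
      { apply lt_INR in Hm'. apply lt_INR in Hpos. rewrite Hpj in Hm'. simpl in Hpos. split.
        - apply Rdiv_lt_0_compat; lra.
        - apply (Rmult_lt_reg_r (2 ^ j)); auto. unfold Rdiv. rewrite Rmult_assoc, Rinv_l; lra. }
      exists (S n). rewrite Nat.iter_succ_r, HT.
      replace (INR m / 2 ^ j) with (INR (m - 2 ^ j) / 2 ^ j + INR 1) by (rewrite HmI; simpl; field; lra).
      rewrite frac_plus; auto.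
      apply lt_INR in Hm'. apply lt_INR in Hpos. rewrite Hpj in Hm'. simpl in Hpos. split.
      * left. apply Rdiv_lt_0_compat; lra.
      * apply (Rmult_lt_reg_r (2 ^ j)); auto. unfold Rdiv. rewrite Rmult_assoc, Rinv_l; lra.
Qed.


Definition ebin (c : nat -> nat) (i : nat) : nat := if Nat.eqb (c i) 0 then 0%nat else 1%nat.
Definition dyad (z : R) : Prop := exists m j, z = INR m / 2 ^ j.

Lemma dig_ebin c : dig 2 (ebin c).
Proof. intros i _. unfold ebin. destruct (Nat.eqb (c i) 0); lia. Qed.

Lemma ebin_term k c i : (3 <= k)%nat -> extreme_digit k (c i) ->
  INR (c i) / (INR (k - 1) * 2 ^ i) = INR (ebin c i) / INR 2 ^ i.
Proof.
  intros Hk Hx. rewrite INR2. unfold ebin. destruct Hx as [H|H]; rewrite H.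
  - simpl. unfold Rdiv. ring.
  - destruct (Nat.eqb_spec (k-1) 0); [lia|].
    assert (0 < INR (k-1)) by (apply lt_0_INR; lia). assert (0 < 2 ^ i) by (apply pow_lt; lra).
    change (INR 1) with 1. field. lra.
Qed.

Lemma psum_ebin k c n : (3 <= k)%nat -> (forall i, (1 <= i <= n)%nat -> extreme_digit k (c i)) ->
  psum (fun n => INR (c n) / (INR (k - 1) * 2 ^ n)) n = dsum 2 (ebin c) n.
Proof.
  intros Hk H. induction n.
  - reflexivity.
  - simpl psum. rewrite IHn by (intros; apply H; lia). rewrite ebin_term by (auto; apply H; lia).
    reflexivity.
Qed.

Lemma inf_sum_ext s s' l : (forall i, s i = s' i) -> infinite_sum s l -> infinite_sum s' l.
Proof.
  intros E H eps He. destruct (H eps He) as [N HN]. exists N. intros n Hn.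
  rewrite <- (sum_eq s s' n) by auto. auto.
Qed.

Lemma dsum_ext B f h n : (forall i, (1 <= i <= n)%nat -> f i = h i) -> dsum B f n = dsum B h n.
Proof.
  intros H. induction n.
  - reflexivity.
  - rewrite !dsum_S, IHn by (intros; apply H; lia). rewrite H by lia. reflexivity.
Qed.

Lemma min_ex (P : nat -> Prop) : (exists n, P n) -> exists n, P n /\ forall m, (m < n)%nat -> ~ P m.
Proof.
  intros [n Hn]. apply NNPP. intro Hno.
  assert (forall n m, (m <= n)%nat -> ~ P m).
  { induction n0; intros m Hm Pm.
    - apply Hno. exists m. split; auto. intros; lia.
    - destruct (Nat.eq_dec m (S n0)).
      + subst. apply Hno. exists (S n0). split; auto. intros m' Hm'. apply IHn0. lia.
      + apply (IHn0 m); auto. lia. }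
  apply (H n n); auto.
Qed.

Lemma GV1 k c w N : (3 <= k)%nat -> g_val k c w -> (1 <= N)%nat -> ~ extreme_digit k (c N) ->
  (forall i, (1 <= i < N)%nat -> extreme_digit k (c i)) ->
  w = dsum 2 (ebin c) (N - 1) + / 2 ^ N.
Proof.
  intros Hk [[N' [H1 [H2 [H3 ->]]]] | [Hall _]] HN Hne Hext.
  - assert (N' = N).
    { destruct (Nat.lt_total N' N) as [h|[h|h]]; auto; exfalso.
      - apply H2, Hext; lia.
      - apply Hne, H3; lia. }
    subst. rewrite psum_ebin; auto. intros; apply H3; lia.
  - exfalso; apply Hne, Hall; lia.
Qed.

Lemma GV2 k c w : (3 <= k)%nat -> g_val k c w -> (forall i, (1 <= i)%nat -> extreme_digit k (c i)) ->
  is_dexp 2 (ebin c) w.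
Proof.
  intros Hk [[N' [H1 [H2 _]]] | [_ Hs]] Hall.
  - exfalso. apply H2, Hall; auto.
  - unfold is_dexp. apply (inf_sum_ext _ _ _ (fun i => ebin_term k c (S i) Hk (Hall (S i) ltac:(lia)))).
    exact Hs.
Qed.

Lemma GVB k c w N : (3 <= k)%nat -> g_val k c w ->
  (forall i, (1 <= i <= N)%nat -> extreme_digit k (c i)) ->
  dsum 2 (ebin c) N <= w <= dsum 2 (ebin c) N + / 2 ^ N.
Proof.
  intros Hk Hg Hext. destruct Hg as [[N' [H1 [H2 [H3 ->]]]] | [Hall Hs]].
  - assert (HN : (N < N')%nat).
    { destruct (Nat.lt_ge_cases N N'); auto. exfalso. apply H2, Hext. lia. }
    rewrite psum_ebin by (auto; intros; apply H3; lia).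
    pose proof (dsum_bound 2 (ebin c) N (N' - 1) ltac:(lia) (dig_ebin c) ltac:(lia)).
    rewrite INR2 in H.
    assert (E : 2 ^ N' = 2 * 2 ^ (N' - 1)) by (replace N' with (S (N' - 1)) at 1 by lia; reflexivity).
    rewrite E.
    assert (0 < 2 ^ (N' - 1)) by (apply pow_lt; lra).
    assert (/ (2 * 2 ^ (N' - 1)) <= / 2 ^ (N' - 1)).
    { apply Rinv_le_contravar; lra. }
    assert (0 < / (2 * 2 ^ (N' - 1))) by (apply Rinv_0_lt_compat; lra). lra.
  - assert (Hd : is_dexp 2 (ebin c) w).
    { unfold is_dexp. apply (inf_sum_ext _ _ _ (fun i => ebin_term k c (S i) Hk (Hall (S i) ltac:(lia)))).
      exact Hs. }
    pose proof (dexp_bounds 2 (ebin c) w ltac:(lia) (dig_ebin c) Hd N). rewrite INR2 in H. exact H.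
Qed.

Lemma GV_exists k c : (3 <= k)%nat -> exists w, g_val k c w.
Proof.
  intros Hk. destruct (classic (exists N, (1 <= N)%nat /\ ~ extreme_digit k (c N))) as [Hex|Hnex].
  - destruct (min_ex _ Hex) as [N [[HN Hne] Hmin]].
    exists (psum (fun n => INR (c n) / (INR (k - 1) * 2 ^ n)) (N - 1) + / 2 ^ N).
    left. exists N. repeat split; auto. intros n Hn. apply NNPP. intro Hc. apply (Hmin n); [lia|]. split; [lia|auto].
  - assert (Hall : forall i, (1 <= i)%nat -> extreme_digit k (c i)).
    { intros i Hi. apply NNPP. intro Hc. apply Hnex. exists i. auto. }
    destruct (dexp_exists 2 (ebin c) ltac:(lia) (dig_ebin c)) as [w Hw].
    exists w. right. split; auto.
    apply (inf_sum_ext _ _ _ (fun i => eq_sym (ebin_term k c (S i) Hk (Hall (S i) ltac:(lia))))).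
    exact Hw.
Qed.

Definition gd (k : nat) (x : R) (n : nat) : nat :=
  match n with O => 0%nat | S m => Z.to_nat (Int_part (INR k * Nat.iter m (T k) x)) end.

Lemma greedy_step k y : (2 <= k)%nat -> 0 <= y < 1 ->
  (Z.to_nat (Int_part (INR k * y)) < k)%nat /\
  T k y = INR k * y - INR (Z.to_nat (Int_part (INR k * y))).
Proof.
  intros Hk Hy. pose proof (base_Int_part (INR k * y)) as [H1 H2].
  set (z := Int_part (INR k * y)) in *.
  assert (Hkp : 0 < INR k) by (apply lt_0_INR; lia).
  assert (Hz0 : (0 <= z)%Z).
  { assert (-1 < z)%Z; [|lia]. apply lt_IZR. simpl. nra. }
  assert (Hzk : (z < Z.of_nat k)%Z).
  { apply lt_IZR. rewrite <- INR_IZR_INZ. nra. }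
  assert (E : INR (Z.to_nat z) = IZR z) by (rewrite INR_IZR_INZ, Znat.Z2Nat.id; auto).
  split; [lia|]. unfold T, frac_part. fold z. rewrite E. reflexivity.
Qed.

Lemma T_range k y : 0 <= T k y < 1.
Proof. unfold T. pose proof (base_fp (INR k * y)). lra. Qed.

Lemma iter_range k x n : 0 <= x < 1 -> 0 <= Nat.iter n (T k) x < 1.
Proof. intros H. destruct n; [exact H|]. simpl. apply T_range. Qed.

Lemma tail_S B f l n : (2 <= B)%nat -> tail B f l (S n) = INR B * tail B f l n - INR (f (S n)).
Proof.
  intro HB. pose proof (INRB_gt1 B HB).
  unfold tail. rewrite dsum_S. simpl pow.
  field. split; [apply pow_nonzero|]; lra.
Qed.

Lemma greedy_tail k x n : (2 <= k)%nat -> 0 <= x < 1 -> tail k (gd k x) x n = Nat.iter n (T k) x.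
Proof.
  intros Hk Hx. induction n.
  - unfold tail. rewrite dsum_0. simpl. ring.
  - rewrite tail_S, IHn by auto. simpl Nat.iter at 2.
    destruct (greedy_step k (Nat.iter n (T k) x) Hk (iter_range k x n Hx)) as [_ E].
    rewrite E. reflexivity.
Qed.

Lemma dig_gd k x : (2 <= k)%nat -> 0 <= x < 1 -> dig k (gd k x).
Proof.
  intros Hk Hx i Hi. destruct i; [lia|]. simpl.
  apply (greedy_step k _ Hk (iter_range k x i Hx)).
Qed.

Lemma greedy_exp k x : (2 <= k)%nat -> 0 <= x < 1 -> is_expansion k (gd k x) x.
Proof.
  intros Hk Hx. split; [apply dig_gd; auto|].
  apply dexp_of_bounds; auto. intro n.
  rewrite (tail_rel k (gd k x) x n Hk) at 2 3. rewrite greedy_tail by auto.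
  pose proof (iter_range k x n Hx). pose proof (powB_pos k n Hk).
  split.
  - assert (0 <= Nat.iter n (T k) x / INR k ^ n) by (apply Rmult_le_pos; [lra|left; apply Rinv_0_lt_compat; lra]).
    lra.
  - assert (Nat.iter n (T k) x / INR k ^ n <= / INR k ^ n).
    { unfold Rdiv. rewrite <- (Rmult_1_l (/ INR k ^ n)) at 2. apply Rmult_le_compat_r; [left; apply Rinv_0_lt_compat|]; lra. }
    lra.
Qed.


Lemma greedy_ext k a b x : (3 <= k)%nat -> 0 <= a < 1 / INR k -> (INR k - 1) / INR k < b ->
  Wset k a b x -> forall i, (1 <= i)%nat -> extreme_digit k (gd k x i).
Proof.
  intros Hk Ha Hb [Hx HW] i Hi. destruct i; [lia|]. simpl.
  pose proof (iter_range k x i Hx) as Hy. specialize (HW i).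
  set (y := Nat.iter i (T k) x) in *.
  assert (Hkp : 0 < INR k) by (apply lt_0_INR; lia).
  assert (Ha' : INR k * a < 1).
  { destruct Ha as [_ Ha]. apply (Rmult_lt_compat_l (INR k)) in Ha; [|lra].
    replace (INR k * (1 / INR k)) with 1 in Ha by (field; lra). lra. }
  assert (Hb' : INR k - 1 < INR k * b).
  { apply (Rmult_lt_compat_l (INR k)) in Hb; [|lra].
    replace (INR k * ((INR k - 1) / INR k)) with (INR k - 1) in Hb by (field; lra). lra. }
  destruct (Rle_or_lt y a) as [Hya|Hya].
  - left. unfold Int_part. rewrite <- (tech_up _ 1%Z).
    + reflexivity.
    + simpl. nra.
    + simpl. nra.
  - assert (Hyb : b <= y) by (destruct (Rle_or_lt b y); auto; exfalso; apply HW; lra).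
    right. unfold Int_part. rewrite <- (tech_up _ (Z.of_nat k)).
    + lia.
    + rewrite <- INR_IZR_INZ. nra.
    + rewrite <- INR_IZR_INZ. nra.
Qed.

Lemma cmp k d u be c v w : (3 <= k)%nat -> is_expansion k d u ->
  (forall i, (1 <= i)%nat -> extreme_digit k (d i)) -> is_dexp 2 (ebin d) be ->
  is_expansion k c v -> g_val k c w ->
  (u <= v -> be <= w) /\ (v <= u -> w <= be) /\ (u < v -> be = w -> dyad be) /\
  (v < u -> be = w -> dyad be).
Proof.
  intros Hk [Hdd Hu] Hde Hb [Hcd Hv] Hg.
  assert (Hk2 : (2 <= k)%nat) by lia.
  destruct (classic (exists N, (1 <= N)%nat /\ d N <> c N)) as [Hex|Hnex].
  2: {
    assert (Hall : forall i, (1 <= i)%nat -> d i = c i)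
      by (intros i Hi; apply NNPP; intro; apply Hnex; eauto).
    assert (Huv : u = v).
    { apply (dexp_unique k d); auto. unfold is_dexp.
      apply (inf_sum_ext (fun i => INR (c (S i)) / INR k ^ S i)); auto.
      intro i. rewrite Hall; auto; lia. }
    assert (Hcx : forall i, (1 <= i)%nat -> extreme_digit k (c i))
      by (intros i Hi; rewrite <- Hall; auto).
    pose proof (GV2 k c w Hk Hg Hcx) as Hw.
    assert (Hbw : be = w).
    { apply (dexp_unique 2 (ebin d)); auto. unfold is_dexp.
      apply (inf_sum_ext (fun i => INR (ebin c (S i)) / INR 2 ^ S i)); auto.
      intro i. unfold ebin. rewrite Hall; auto; lia. }
    repeat split; intros; try lra. }
  destruct (min_ex _ Hex) as [N [[HN Hne] Hmin]].
  assert (Hpre : forall i, (1 <= i < N)%nat -> d i = c i).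
  { intros i Hi. apply NNPP. intro. apply (Hmin i); [lia|]. split; [lia|auto]. }
  destruct N as [|M]; [lia|].
  assert (HQ : dsum k d M = dsum k c M) by (apply dsum_ext; intros; apply Hpre; lia).
  assert (HP : dsum 2 (ebin d) M = dsum 2 (ebin c) M)
    by (apply dsum_ext; intros; unfold ebin; rewrite Hpre; auto; lia).
  assert (Hcpre : forall i, (1 <= i <= M)%nat -> extreme_digit k (c i))
    by (intros; rewrite <- Hpre; [apply Hde|]; lia).
  pose proof (dexp_bounds k d u Hk2 Hdd Hu (S M)) as Bu.
  pose proof (dexp_bounds k c v Hk2 Hcd Hv (S M)) as Bv.
  pose proof (dexp_bounds 2 (ebin d) be ltac:(lia) (dig_ebin d) Hb (S M)) as Bb.
  pose proof (tail_rel k d u (S M) Hk2) as Tu.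
  pose proof (dexp_shift k d u (S M) Hk2 Hdd Hu) as Su.
  pose proof (tail_rel 2 (ebin d) be (S M) ltac:(lia)) as Tb.
  pose proof (dexp_shift 2 (ebin d) be (S M) ltac:(lia) (dig_ebin d) Hb) as Sb.
  pose proof (tail_bounds k d u (S M) Hk2 Hdd Hu) as TBu.
  pose proof (tail_bounds 2 (ebin d) be (S M) ltac:(lia) (dig_ebin d) Hb) as TBb.
  rewrite !dsum_S in Bu, Bv, Bb, Tu, Tb. rewrite <- HQ in Bv. rewrite INR2 in Bb, Tb.
  pose proof (dsum_nat 2 (ebin d) M ltac:(lia)) as [m Hm]. rewrite INR2 in Hm.
  assert (Hdy : dyad (dsum 2 (ebin d) M + / 2 ^ S M)).
  { exists (2 * m + 1)%nat, (S M). rewrite Hm, plus_INR, mult_INR. simpl pow.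
    assert (0 < 2 ^ M) by (apply pow_lt; lra). simpl INR. field. lra. }
  set (Q := dsum k d M) in *. set (P := dsum 2 (ebin d) M) in *.
  set (xu := tail k d u (S M)) in *. set (xb := tail 2 (ebin d) be (S M)) in *.
  assert (HK : 0 < INR k ^ S M) by (apply powB_pos; lia).
  assert (HP2 : 0 < 2 ^ S M) by (apply pow_lt; lra).
  set (K := INR k ^ S M) in *.
  assert (HiK : 0 < / K) by (apply Rinv_0_lt_compat; lra).
  assert (Hi2 : 0 < / 2 ^ S M) by (apply Rinv_0_lt_compat; lra).
  unfold Rdiv in *.
  pose proof (Hcd (S M) ltac:(lia)) as HcN.
  assert (HcR : INR (c (S M)) <= INR k - 1) by (apply dig_le; auto).
  assert (Hk1 : INR (k - 1) = INR k - 1) by (rewrite minus_INR by lia; reflexivity).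
  assert (Hk3 : 3 <= INR k) by (apply le_INR in Hk; simpl in Hk; lra).
  destruct (Hde (S M) ltac:(lia)) as [Hd0|Hdm].
  -
    assert (Hc0 : c (S M) <> 0%nat) by (rewrite <- Hd0; auto).
    assert (He0 : ebin d (S M) = 0%nat) by (unfold ebin; rewrite Hd0; reflexivity).
    rewrite Hd0 in Bu, Tu. rewrite He0 in Bb, Tb. simpl INR in Bu, Tu, Bb, Tb.
    assert (Hc1 : 1 <= INR (c (S M))) by (apply (le_INR 1); lia).
    assert (A1 : u <= Q + / K) by lra.
    assert (A3 : Q + / K <= v) by nra.
    assert (A4 : be <= P + / 2 ^ S M) by lra.
    assert (A5 : P + / 2 ^ S M <= w).
    { destruct (Nat.eq_dec (c (S M)) (k - 1)) as [Hcm|Hcm].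
      - assert (Hx : forall i, (1 <= i <= S M)%nat -> extreme_digit k (c i)).
        { intros i Hi. destruct (Nat.eq_dec i (S M)); [subst i; right; auto|]. apply Hcpre; lia. }
        pose proof (GVB k c w (S M) Hk Hg Hx) as [G _]. rewrite dsum_S, <- HP in G.
        unfold ebin in G; unfold Rdiv in G. destruct (Nat.eqb_spec (c (S M)) 0); [lia|]. rewrite INR2 in G.
        simpl INR in G. fold P in G. lra.
      - assert (Hnx : ~ extreme_digit k (c (S M))) by (intros [h|h]; auto).
        rewrite (GV1 k c w (S M) Hk Hg ltac:(lia) Hnx) by (intros; apply Hcpre; lia).
        replace (S M - 1)%nat with M by lia. rewrite <- HP. lra. }
    repeat split.
    + intros; lra.
    + intros Hvu.
      assert (Hc1' : c (S M) = 1%nat).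
      { destruct (Nat.eq_dec (c (S M)) 1); auto. exfalso.
        assert (2 <= INR (c (S M))) by (apply (le_INR 2); lia). nra. }
      assert (Hnx : ~ extreme_digit k (c (S M))) by (intros [h|h]; lia).
      rewrite (GV1 k c w (S M) Hk Hg ltac:(lia) Hnx) by (intros; apply Hcpre; lia).
      replace (S M - 1)%nat with M by lia. rewrite <- HP. fold P.
      assert (Hmax : forall j, (1 <= j)%nat -> shift (ebin d) (S M) j = (2 - 1)%nat).
      { intros j Hj. unfold shift, ebin.
        destruct (Nat.eqb_spec (d (j + S M)%nat) 0) as [h|h]; [|reflexivity]. exfalso.
        pose proof (dexp_zero_lt1 k (shift d (S M)) xu j Hk2 (dig_shift k d (S M) Hdd) Hj h Su).
        fold xu in H. nra. }
      pose proof (dexp_allmax 2 _ _ ltac:(lia) Hmax Sb). fold xb in H. rewrite H in Tb. lra.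
    + intros Huv Hbw. assert (be = P + / 2 ^ S M) by lra. rewrite H. exact Hdy.
    + intros; lra.
  -
    assert (HcN' : (c (S M) < k - 1)%nat) by (assert (c (S M) <> (k-1)%nat) by (rewrite <- Hdm; auto); lia).
    assert (He1 : ebin d (S M) = 1%nat) by (unfold ebin; rewrite Hdm; destruct (Nat.eqb_spec (k-1) 0); [lia|reflexivity]).
    rewrite Hdm, Hk1 in Bu, Tu. rewrite He1 in Bb, Tb. simpl INR in Bb, Tb.
    assert (HcR2 : INR (c (S M)) + 1 <= INR k - 1).
    { rewrite <- Hk1. rewrite <- S_INR. apply le_INR. lia. }
    assert (B1 : Q + (INR k - 1) * / K <= u) by lra.
    assert (B2 : v <= Q + (INR k - 1) * / K) by nra.
    assert (B3 : P + / 2 ^ S M <= be) by lra.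
    assert (B4 : w <= P + / 2 ^ S M).
    { destruct (Nat.eq_dec (c (S M)) 0) as [Hcm|Hcm].
      - assert (Hx : forall i, (1 <= i <= S M)%nat -> extreme_digit k (c i)).
        { intros i Hi. destruct (Nat.eq_dec i (S M)); [subst i; left; auto|]. apply Hcpre; lia. }
        pose proof (GVB k c w (S M) Hk Hg Hx) as [_ G]. rewrite dsum_S, <- HP in G.
        unfold ebin in G; unfold Rdiv in G. rewrite Hcm in G. simpl Nat.eqb in G. rewrite INR2 in G.
        simpl INR in G. fold P in G. lra.
      - assert (Hnx : ~ extreme_digit k (c (S M))) by (intros [h|h]; lia).
        rewrite (GV1 k c w (S M) Hk Hg ltac:(lia) Hnx) by (intros; apply Hcpre; lia).
        replace (S M - 1)%nat with M by lia. rewrite <- HP. lra. }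
    repeat split.
    + intros Huv.
      assert (Hc1' : c (S M) = (k - 2)%nat).
      { destruct (Nat.eq_dec (c (S M)) (k - 2)); auto. exfalso.
        assert (INR (c (S M)) + 2 <= INR k - 1).
        { rewrite <- Hk1. replace (INR (c (S M)) + 2) with (INR (S (S (c (S M))))) by (rewrite !S_INR; ring).
          apply le_INR. lia. }
        nra. }
      assert (Hnx : ~ extreme_digit k (c (S M))) by (intros [h|h]; lia).
      rewrite (GV1 k c w (S M) Hk Hg ltac:(lia) Hnx) by (intros; apply Hcpre; lia).
      replace (S M - 1)%nat with M by lia. rewrite <- HP. fold P.
      assert (Hz : forall j, (1 <= j)%nat -> shift (ebin d) (S M) j = 0%nat).
      { intros j Hj. unfold shift, ebin.
        destruct (Nat.eqb_spec (d (j + S M)%nat) 0) as [h|h]; [reflexivity|]. exfalso.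
        assert (h1 : (1 <= shift d (S M) j)%nat) by (unfold shift; lia).
        pose proof (dexp_nz_pos k (shift d (S M)) xu j Hk2 (dig_shift k d (S M) Hdd) Hj h1 Su).
        fold xu in H. nra. }
      pose proof (dexp_allzero 2 _ _ ltac:(lia) Hz Sb). fold xb in H. rewrite H in Tb. lra.
    + intros; lra.
    + intros; lra.
    + intros Huv Hbw. assert (be = P + / 2 ^ S M) by lra. rewrite H. exact Hdy.
Qed.


Lemma exp_exists k x : (3 <= k)%nat -> 0 <= x <= 1 -> exists c, is_expansion k c x.
Proof.
  intros Hk Hx. destruct (Rle_lt_or_eq_dec x 1 (proj2 Hx)) as [Hlt|Heq].
  - exists (gd k x). apply greedy_exp; [lia|lra].
  - subst x. exists (fun _ => (k - 1)%nat). split.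
    + intros; lia.
    + apply (dexp_allmax_ex k (fun _ => (k - 1)%nat)); [lia|auto].
Qed.

Lemma gspec k x : (3 <= k)%nat -> 0 <= x <= 1 ->
  exists c, is_expansion k c x /\ g_val k c (g k x).
Proof.
  intros Hk Hx. unfold g.
  apply (epsilon_spec (inhabits 0) (fun y => exists a, is_expansion k a x /\ g_val k a y)).
  destruct (exp_exists k x Hk Hx) as [c Hc]. destruct (GV_exists k c Hk) as [w Hw].
  exists w, c. auto.
Qed.

Lemma ga_lt k a c w : (3 <= k)%nat -> 0 <= a < 1 / INR k -> is_expansion k c a ->
  g_val k c w -> w < 1 / 2.
Proof.
  intros Hk Ha [Hcd Hc] Hg. assert (Hk2 : (2 <= k)%nat) by lia.
  assert (Hkp : 0 < INR k) by (apply lt_0_INR; lia).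
  pose proof (dexp_bounds k c a Hk2 Hcd Hc 1) as B1. rewrite dsum_S, dsum_0 in B1.
  assert (Hc1 : c 1%nat = 0%nat).
  { destruct (Nat.eq_dec (c 1%nat) 0); auto. exfalso.
    assert (1 <= INR (c 1%nat)) by (apply (le_INR 1); lia).
    simpl pow in B1. rewrite Rmult_1_r in B1. unfold Rdiv in *.
    assert (0 < / INR k) by (apply Rinv_0_lt_compat; lra). nra. }
  assert (He0 : ebin c 1%nat = 0%nat) by (unfold ebin; rewrite Hc1; reflexivity).
  destruct (classic (exists N, (1 <= N)%nat /\ ~ extreme_digit k (c N))) as [Hex|Hnex].
  - destruct (min_ex _ Hex) as [N [[HN Hne] Hmin]].
    assert (Hpre : forall i, (1 <= i < N)%nat -> extreme_digit k (c i)).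
    { intros i Hi. apply NNPP. intro. apply (Hmin i); [lia|]. split; [lia|auto]. }
    assert (HN2 : (2 <= N)%nat).
    { destruct (Nat.eq_dec N 1); [|lia]. subst. exfalso. apply Hne. left. auto. }
    rewrite (GV1 k c w N Hk Hg HN Hne Hpre).
    pose proof (dsum_bound 2 (ebin c) 1 (N - 1) ltac:(lia) (dig_ebin c) ltac:(lia)) as [_ H].
    rewrite dsum_S, dsum_0 in H. rewrite He0 in H.
    rewrite INR2 in H. simpl INR in H.
    assert (E : 2 ^ N = 2 * 2 ^ (N - 1)) by (replace N with (S (N - 1)) at 1 by lia; reflexivity).
    rewrite E. assert (0 < 2 ^ (N - 1)) by (apply pow_lt; lra).
    assert (E2 : / (2 * 2 ^ (N - 1)) = / 2 ^ (N - 1) / 2) by (field; lra).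
    rewrite E2. assert (0 < / 2 ^ (N - 1)) by (apply Rinv_0_lt_compat; lra).
    simpl pow in H. lra.
  - assert (Hall : forall i, (1 <= i)%nat -> extreme_digit k (c i)).
    { intros i Hi. apply NNPP. intro Hc'. apply Hnex. exists i. auto. }
    pose proof (GV2 k c w Hk Hg Hall) as Hw.
    assert (Hj : exists j, (1 <= j)%nat /\ shift c 1 j = 0%nat).
    { apply NNPP. intro Hno.
      assert (Hmax : forall j, (1 <= j)%nat -> shift c 1 j = (k - 1)%nat).
      { intros j Hj. destruct (Hall (j + 1)%nat ltac:(lia)) as [h|h]; unfold shift; auto.
        exfalso. apply Hno. exists j. auto. }
      pose proof (dexp_allmax k _ _ Hk2 Hmax (dexp_shift k c a 1 Hk2 Hcd Hc)) as Ht.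
      pose proof (tail_rel k c a 1 Hk2) as Tr. rewrite Ht, dsum_S, dsum_0, Hc1 in Tr.
      simpl INR in Tr. simpl pow in Tr. rewrite Rmult_1_r in Tr.
      destruct Ha as [_ Ha]. unfold Rdiv in *. lra. }
    destruct Hj as [j [Hj1 Hj0]].
    assert (Hz : shift (ebin c) 1 j = 0%nat) by (unfold shift, ebin; unfold shift in Hj0; rewrite Hj0; reflexivity).
    pose proof (dexp_zero_lt1 2 _ _ j ltac:(lia) (dig_shift 2 _ 1 (dig_ebin c)) Hj1 Hz
      (dexp_shift 2 (ebin c) w 1 ltac:(lia) (dig_ebin c) Hw)) as Ht.
    pose proof (tail_rel 2 (ebin c) w 1 ltac:(lia)) as Tr.
    rewrite dsum_S, dsum_0 in Tr. rewrite He0 in Tr.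
    rewrite INR2 in Tr. simpl INR in Tr. simpl pow in Tr. rewrite Rmult_1_r in Tr.
    unfold Rdiv in *. lra.
Qed.

Lemma gb_gt k b c w : (3 <= k)%nat -> (INR k - 1) / INR k < b <= 1 -> is_expansion k c b ->
  g_val k c w -> 1 / 2 < w.
Proof.
  intros Hk Hb [Hcd Hc] Hg. assert (Hk2 : (2 <= k)%nat) by lia.
  assert (Hkp : 0 < INR k) by (apply lt_0_INR; lia).
  pose proof (dexp_bounds k c b Hk2 Hcd Hc 1) as B1. rewrite dsum_S, dsum_0 in B1.
  assert (Hk1 : INR (k - 1) = INR k - 1) by (rewrite minus_INR by lia; reflexivity).
  assert (Hc1 : c 1%nat = (k - 1)%nat).
  { destruct (Nat.eq_dec (c 1%nat) (k - 1)); auto. exfalso.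
    assert (INR (c 1%nat) + 1 <= INR k - 1).
    { rewrite <- Hk1, <- S_INR. apply le_INR. pose proof (Hcd 1%nat ltac:(lia)). lia. }
    simpl pow in B1. rewrite Rmult_1_r in B1. unfold Rdiv in *.
    assert (0 < / INR k) by (apply Rinv_0_lt_compat; lra). nra. }
  assert (He1 : ebin c 1%nat = 1%nat) by (unfold ebin; rewrite Hc1; destruct (Nat.eqb_spec (k-1) 0); [lia|reflexivity]).
  destruct (classic (exists N, (1 <= N)%nat /\ ~ extreme_digit k (c N))) as [Hex|Hnex].
  - destruct (min_ex _ Hex) as [N [[HN Hne] Hmin]].
    assert (Hpre : forall i, (1 <= i < N)%nat -> extreme_digit k (c i)).
    { intros i Hi. apply NNPP. intro. apply (Hmin i); [lia|]. split; [lia|auto]. }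
    assert (HN2 : (2 <= N)%nat).
    { destruct (Nat.eq_dec N 1); [|lia]. subst. exfalso. apply Hne. right. auto. }
    rewrite (GV1 k c w N Hk Hg HN Hne Hpre).
    pose proof (dsum_bound 2 (ebin c) 1 (N - 1) ltac:(lia) (dig_ebin c) ltac:(lia)) as [H _].
    rewrite dsum_S, dsum_0, He1 in H. rewrite INR2 in H. simpl INR in H. simpl pow in H.
    assert (0 < / 2 ^ N) by (apply Rinv_0_lt_compat, pow_lt; lra). lra.
  - assert (Hall : forall i, (1 <= i)%nat -> extreme_digit k (c i)).
    { intros i Hi. apply NNPP. intro Hc'. apply Hnex. exists i. auto. }
    pose proof (GV2 k c w Hk Hg Hall) as Hw.
    assert (Hj : exists j, (1 <= j)%nat /\ shift c 1 j = (k - 1)%nat).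
    { apply NNPP. intro Hno.
      assert (Hz : forall j, (1 <= j)%nat -> shift c 1 j = 0%nat).
      { intros j Hj. destruct (Hall (j + 1)%nat ltac:(lia)) as [h|h]; unfold shift; auto.
        exfalso. apply Hno. exists j. auto. }
      pose proof (dexp_allzero k _ _ Hk2 Hz (dexp_shift k c b 1 Hk2 Hcd Hc)) as Ht.
      pose proof (tail_rel k c b 1 Hk2) as Tr. rewrite Ht, dsum_S, dsum_0, Hc1, Hk1 in Tr.
      simpl pow in Tr. rewrite Rmult_1_r in Tr.
      destruct Hb as [Hb _]. unfold Rdiv in *. lra. }
    destruct Hj as [j [Hj1 Hj0]].
    assert (Hz : (1 <= shift (ebin c) 1 j)%nat).
    { unfold shift, ebin; unfold shift in Hj0; rewrite Hj0. destruct (Nat.eqb_spec (k-1) 0); lia. }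
    pose proof (dexp_nz_pos 2 _ _ j ltac:(lia) (dig_shift 2 _ 1 (dig_ebin c)) Hj1 Hz
      (dexp_shift 2 (ebin c) w 1 ltac:(lia) (dig_ebin c) Hw)) as Ht.
    pose proof (tail_rel 2 (ebin c) w 1 ltac:(lia)) as Tr.
    rewrite dsum_S, dsum_0, He1 in Tr.
    rewrite INR2 in Tr. simpl INR in Tr. simpl pow in Tr. rewrite Rmult_1_r in Tr.
    unfold Rdiv in *. lra.
Qed.


Lemma hit ga gb z : ga < 1 / 2 < gb -> dyad z -> 0 < z < 1 ->
  (forall n, ~ (ga < Nat.iter n (T 2) z < gb)) -> False.
Proof.
  intros Hg [m [j ->]] Hz HW. destruct (dyadic_half j m Hz) as [n Hn].
  apply (HW n). rewrite Hn. lra.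
Qed.

Lemma shift_ext k d n : (forall i, (1 <= i)%nat -> extreme_digit k (d i)) ->
  forall i, (1 <= i)%nat -> extreme_digit k (shift d n i).
Proof. intros H i Hi. unfold shift. apply H. lia. Qed.

Lemma shift_exp k d x n : (2 <= k)%nat -> is_expansion k d x ->
  is_expansion k (shift d n) (tail k d x n).
Proof.
  intros Hk [Hd Hx]. split; [apply dig_shift; auto|]. apply dexp_shift; auto.
Qed.

Lemma ebin_shift d G n : is_dexp 2 (shift (ebin d) n) G -> is_dexp 2 (ebin (shift d n)) G.
Proof. intro H. exact H. Qed.

Lemma Gval k x d c w : (3 <= k)%nat -> is_expansion k d x ->
  (forall i, (1 <= i)%nat -> extreme_digit k (d i)) ->
  is_expansion k c x -> g_val k c w -> exists G, is_dexp 2 (ebin d) G /\ G = w.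
Proof.
  intros Hk Hd He Hc Hg. destruct (dexp_exists 2 (ebin d) ltac:(lia) (dig_ebin d)) as [G HG].
  exists G. split; auto.
  destruct (cmp k d x G c x w Hk Hd He HG Hc Hg) as [H1 [H2 _]].
  specialize (H1 (Rle_refl x)). specialize (H2 (Rle_refl x)). lra.
Qed.

Lemma part_fwd k a b x : (3 <= k)%nat -> 0 <= a < 1 / INR k -> (INR k - 1) / INR k < b <= 1 ->
  Wset k a b x -> Wset 2 (g k a) (g k b) (g k x).
Proof.
  intros Hk Ha Hb HWx. assert (Hk2 : (2 <= k)%nat) by lia.
  pose proof HWx as [Hx HW].
  assert (Hkp : 0 < INR k) by (apply lt_0_INR; lia).
  assert (Ha1 : 0 <= a <= 1).
  { split; [lra|]. destruct Ha as [_ Ha]. assert (1 / INR k <= 1); [|lra].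
    apply (Rmult_le_reg_l (INR k)); auto. replace (INR k * (1 / INR k)) with 1 by (field; lra).
    assert (3 <= INR k) by (apply (le_INR 3) in Hk; simpl in Hk; lra). lra. }
  assert (Hb1 : 0 <= b <= 1).
  { split; [|lra]. destruct Hb as [Hb _]. assert (0 <= (INR k - 1) / INR k); [|lra].
    assert (3 <= INR k) by (apply (le_INR 3) in Hk; simpl in Hk; lra). unfold Rdiv. apply Rmult_le_pos; [lra|]. left; apply Rinv_0_lt_compat; lra. }
  destruct (gspec k a Hk Ha1) as [ca [Hca Hga]].
  destruct (gspec k b Hk Hb1) as [cb [Hcb Hgb]].
  destruct (gspec k x Hk ltac:(lra)) as [cx [Hcx Hgx]].
  set (d := gd k x).
  assert (Hd : is_expansion k d x) by (apply greedy_exp; auto).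
  assert (He : forall i, (1 <= i)%nat -> extreme_digit k (d i))
    by (apply (greedy_ext k a b x); auto; lra).
  destruct (Gval k x d cx (g k x) Hk Hd He Hcx Hgx) as [G [HG HGe]].
  rewrite <- HGe.
  assert (HX : forall n, tail k d x n = Nat.iter n (T k) x) by (intro; apply greedy_tail; auto).
  assert (HB1 : forall n, tail 2 (ebin d) G n < 1).
  { intro n. pose proof (tail_bounds 2 (ebin d) G n ltac:(lia) (dig_ebin d) HG).
    destruct (Rlt_le_dec (tail 2 (ebin d) G n) 1) as [h|h]; auto. exfalso.
    destruct (classic (exists j, (1 <= j)%nat /\ shift d n j = 0%nat)) as [[j [Hj Hj0]]|Hno].
    - assert (Hz : shift (ebin d) n j = 0%nat) by (unfold shift, ebin; unfold shift in Hj0; rewrite Hj0; reflexivity).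
      pose proof (dexp_zero_lt1 2 _ _ j ltac:(lia) (dig_shift 2 _ n (dig_ebin d)) Hj Hz
        (dexp_shift 2 (ebin d) G n ltac:(lia) (dig_ebin d) HG)). lra.
    - assert (Hmax : forall j, (1 <= j)%nat -> shift d n j = (k - 1)%nat).
      { intros j Hj. destruct (shift_ext k d n He j Hj) as [h'|h']; auto. exfalso. apply Hno; eauto. }
      pose proof (dexp_allmax k _ _ Hk2 Hmax (proj2 (shift_exp k d x n Hk2 Hd))).
      rewrite HX in H0. pose proof (iter_range k x n Hx). lra. }
  assert (Horb : forall n, Nat.iter n (T 2) G = tail 2 (ebin d) G n)
    by (apply dexp_orbit; auto; apply dig_ebin).
  split.
  - pose proof (Horb 0%nat). simpl in H. rewrite H. split; [|apply HB1].
    apply (tail_bounds 2 (ebin d) G 0 ltac:(lia) (dig_ebin d) HG).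
  - intros n [H1 H2]. rewrite Horb in H1, H2.
    pose proof (shift_exp k d x n Hk2 Hd) as Hsd.
    pose proof (ebin_shift d _ n (dexp_shift 2 (ebin d) G n ltac:(lia) (dig_ebin d) HG)) as Hsb.
    pose proof (shift_ext k d n He) as Hse.
    specialize (HW n). rewrite <- HX in HW.
    destruct (Rle_or_lt (tail k d x n) a) as [h|h].
    + destruct (cmp k _ _ _ ca a (g k a) Hk Hsd Hse Hsb Hca Hga) as [C _]. specialize (C h). lra.
    + assert (h' : b <= tail k d x n) by (destruct (Rle_or_lt b (tail k d x n)); auto; exfalso; apply HW; lra).
      destruct (cmp k _ _ _ cb b (g k b) Hk Hsd Hse Hsb Hcb Hgb) as [_ [C _]]. specialize (C h'). lra.
Qed.


Lemma a01 k a : (3 <= k)%nat -> 0 <= a < 1 / INR k -> 0 <= a <= 1.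
Proof.
  intros Hk Ha. assert (Hkp : 3 <= INR k) by (apply (le_INR 3) in Hk; simpl in Hk; lra).
  split; [lra|]. destruct Ha as [_ Ha]. assert (1 / INR k <= 1); [|lra].
  apply (Rmult_le_reg_l (INR k)); [lra|]. replace (INR k * (1 / INR k)) with 1 by (field; lra). lra.
Qed.

Lemma b01 k b : (3 <= k)%nat -> (INR k - 1) / INR k < b <= 1 -> 0 <= b <= 1.
Proof.
  intros Hk Hb. assert (Hkp : 3 <= INR k) by (apply (le_INR 3) in Hk; simpl in Hk; lra).
  split; [|lra]. destruct Hb as [Hb _]. assert (0 <= (INR k - 1) / INR k); [|lra].
  unfold Rdiv. apply Rmult_le_pos; [lra|]. left; apply Rinv_0_lt_compat; lra.
Qed.

Lemma gab k a b : (3 <= k)%nat -> 0 <= a < 1 / INR k -> (INR k - 1) / INR k < b <= 1 ->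
  g k a < 1 / 2 < g k b.
Proof.
  intros Hk Ha Hb.
  destruct (gspec k a Hk (a01 k a Hk Ha)) as [ca [Hca Hga]].
  destruct (gspec k b Hk (b01 k b Hk Hb)) as [cb [Hcb Hgb]].
  split; [apply (ga_lt k a ca) | apply (gb_gt k b cb)]; auto.
Qed.

Lemma part_bwd k a b x : (3 <= k)%nat -> 0 <= a < 1 / INR k -> (INR k - 1) / INR k < b <= 1 ->
  Cset k x -> Wset 2 (g k a) (g k b) (g k x) -> Wset k a b x.
Proof.
  intros Hk Ha Hb [Hx01 [d [Hd He]]] HW2. assert (Hk2 : (2 <= k)%nat) by lia.
  pose proof (gab k a b Hk Ha Hb) as Hgab.
  destruct (gspec k a Hk (a01 k a Hk Ha)) as [ca [Hca Hga]].
  destruct (gspec k b Hk (b01 k b Hk Hb)) as [cb [Hcb Hgb]].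
  destruct (gspec k x Hk Hx01) as [cx [Hcx Hgx]].
  destruct (Gval k x d cx (g k x) Hk Hd He Hcx Hgx) as [G [HG HGe]].
  rewrite <- HGe in HW2. destruct HW2 as [HG01 HW2].
  assert (HB1 : forall n, tail 2 (ebin d) G n < 1).
  { intro n. pose proof (tail_bounds 2 (ebin d) G n ltac:(lia) (dig_ebin d) HG).
    destruct (Rlt_le_dec (tail 2 (ebin d) G n) 1) as [h|h]; auto. exfalso.
    assert (Ht : tail 2 (ebin d) G n = 1) by lra.
    pose proof (tail_rel 2 (ebin d) G n ltac:(lia)) as Tr. rewrite Ht, INR2 in Tr.
    destruct (dsum_nat 2 (ebin d) n ltac:(lia)) as [m Hm]. rewrite Hm, INR2 in Tr.
    assert (0 < 2 ^ n) by (apply pow_lt; lra).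
    apply (hit (g k a) (g k b) G); auto.
    - exists (m + 1)%nat, n. rewrite Tr, plus_INR. simpl INR. field. lra.
    - split; [|lra]. rewrite Tr. pose proof (pos_INR m).
      assert (0 <= INR m / 2 ^ n) by (unfold Rdiv; apply Rmult_le_pos; [lra|left; apply Rinv_0_lt_compat; lra]).
      assert (0 < 1 / 2 ^ n) by (apply Rdiv_lt_0_compat; lra). lra. }
  assert (HX1 : forall n, tail k d x n < 1).
  { intro n. pose proof (tail_bounds k d x n Hk2 (proj1 Hd) (proj2 Hd)).
    destruct (Rlt_le_dec (tail k d x n) 1) as [h|h]; auto. exfalso.
    destruct (classic (exists j, (1 <= j)%nat /\ shift d n j = 0%nat)) as [[j [Hj Hj0]]|Hno].
    - pose proof (dexp_zero_lt1 k _ _ j Hk2 (dig_shift k _ n (proj1 Hd)) Hj Hj0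
        (proj2 (shift_exp k d x n Hk2 Hd))). lra.
    - assert (Hmax : forall j, (1 <= j)%nat -> shift (ebin d) n j = (2 - 1)%nat).
      { intros j Hj. destruct (shift_ext k d n He j Hj) as [h'|h'].
        - exfalso. apply Hno; eauto.
        - unfold shift, ebin. unfold shift in h'. rewrite h'. destruct (Nat.eqb_spec (k-1) 0); [lia|reflexivity]. }
      pose proof (dexp_allmax 2 _ _ ltac:(lia) Hmax (dexp_shift 2 (ebin d) G n ltac:(lia) (dig_ebin d) HG)).
      specialize (HB1 n). lra. }
  assert (Horb2 : forall n, Nat.iter n (T 2) G = tail 2 (ebin d) G n)
    by (apply dexp_orbit; auto; apply dig_ebin).
  assert (Horbk : forall n, Nat.iter n (T k) x = tail k d x n)
    by (apply (dexp_orbit k d x Hk2 (proj1 Hd) (proj2 Hd) HX1)).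
  split.
  - pose proof (Horbk 0%nat). simpl in H. specialize (HX1 0%nat). lra.
  - intros n [H1 H2]. rewrite Horbk in H1, H2.
    pose proof (shift_exp k d x n Hk2 Hd) as Hsd.
    pose proof (ebin_shift d _ n (dexp_shift 2 (ebin d) G n ltac:(lia) (dig_ebin d) HG)) as Hsb.
    pose proof (shift_ext k d n He) as Hse.
    destruct (cmp k _ _ _ ca a (g k a) Hk Hsd Hse Hsb Hca Hga) as [_ [Ca1 [_ Ca2]]].
    destruct (cmp k _ _ _ cb b (g k b) Hk Hsd Hse Hsb Hcb Hgb) as [Cb1 [_ [Cb2 _]]].
    specialize (Ca1 (Rlt_le _ _ H1)). specialize (Cb1 (Rlt_le _ _ H2)).
    specialize (Ca2 H1). specialize (Cb2 H2).
    pose proof (HW2 n) as Hn. rewrite Horb2 in Hn.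
    set (B := tail 2 (ebin d) G n) in *.
    assert (Hdy : dyad B).
    { destruct (Req_dec B (g k a)) as [E|E]; [apply Ca2; auto|].
      destruct (Req_dec B (g k b)) as [E'|E']; [apply Cb2; auto|].
      exfalso. apply Hn. lra. }
    apply (hit (g k a) (g k b) B); auto.
    + split; [|apply HB1].
      destruct (classic (exists j, (1 <= j)%nat /\ shift d n j <> 0%nat)) as [[j [Hj Hj0]]|Hno].
      * assert (Hz : (1 <= shift (ebin d) n j)%nat).
        { unfold shift, ebin. unfold shift in Hj0. destruct (Nat.eqb_spec (d (j + n)%nat) 0); lia. }
        apply (dexp_nz_pos 2 _ _ j ltac:(lia) (dig_shift 2 _ n (dig_ebin d)) Hj Hz
          (dexp_shift 2 (ebin d) G n ltac:(lia) (dig_ebin d) HG)).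
      * exfalso. assert (Hz : forall j, (1 <= j)%nat -> shift d n j = 0%nat).
        { intros j Hj. apply NNPP. intro. apply Hno. eauto. }
        pose proof (dexp_allzero k _ _ Hk2 Hz (proj2 Hsd)). lra.
    + intro m. unfold B. rewrite <- Horb2, <- Nat.iter_add. apply HW2.
Qed.


Lemma part_b k a b x : (3 <= k)%nat -> 0 <= a < 1 / INR k -> (INR k - 1) / INR k < b <= 1 ->
  0 <= x <= 1 -> Wset 2 (g k a) (g k b) (g k x) -> ~ Bset k x.
Proof.
  intros Hk Ha Hb Hx01 HW2 [n [l [Hn [Hl [Hlk Hx]]]]]. assert (Hk2 : (2 <= k)%nat) by lia.
  pose proof (gab k a b Hk Ha Hb) as Hgab.
  assert (Hkp : 3 <= INR k) by (apply (le_INR 3) in Hk; simpl in Hk; lra).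
  destruct (gspec k x Hk Hx01) as [c [Hc Hg]].
  pose proof Hg as Hg'.
  destruct Hg as [[N [H1 [H2 [H3 Hw]]]] | [Hall Hs]].
  - rewrite psum_ebin in Hw by (auto; intros; apply H3; lia).
    destruct HW2 as [HG01 HW2'].
    destruct (dsum_nat 2 (ebin c) (N - 1) ltac:(lia)) as [m Hm]. rewrite Hm, INR2 in Hw.
    assert (E : 2 ^ N = 2 * 2 ^ (N - 1)) by (replace N with (S (N - 1)) at 1 by lia; reflexivity).
    assert (0 < 2 ^ (N - 1)) by (apply pow_lt; lra).
    apply (hit (g k a) (g k b) (g k x)); auto.
    + exists (2 * m + 1)%nat, N. rewrite Hw, E, plus_INR, mult_INR. simpl INR. field. lra.
    + split; [|lra]. rewrite Hw. pose proof (pos_INR m).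
      assert (0 <= INR m / 2 ^ (N - 1)) by (unfold Rdiv; apply Rmult_le_pos; [lra|left; apply Rinv_0_lt_compat; lra]).
      assert (0 < / 2 ^ N) by (apply Rinv_0_lt_compat; lra). lra.
  - assert (HC : Cset k x) by (split; auto; exists c; auto).
    destruct (part_bwd k a b x Hk Ha Hb HC HW2) as [Hx' HW].
    assert (Hpn : 0 < INR k ^ n) by (apply powB_pos; lia).
    assert (Hz : Nat.iter n (T k) x = 0).
    { destruct (dsum_nat k (gd k x) n Hk2) as [m Hm].
      pose proof (greedy_tail k x n Hk2 Hx') as H. pose proof (iter_range k x n Hx') as H0.
      unfold tail in H. rewrite Hm in H.
      assert (E : INR k ^ n * (x - INR m / INR k ^ n) = INR l - INR m) by (rewrite Hx; field; lra).
      rewrite E in H.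
      rewrite <- H in H0 |- *.
      destruct (Nat.lt_total l m) as [h|[h|h]].
      - exfalso.
        assert (INR l + 1 <= INR m) by (rewrite <- S_INR; apply le_INR; lia). lra.
      - subst. ring.
      - exfalso.
        assert (INR m + 1 <= INR l) by (rewrite <- S_INR; apply le_INR; lia). lra. }
    assert (Hxpos : 0 < x).
    { rewrite Hx. apply Rdiv_lt_0_compat; auto. apply lt_0_INR. lia. }
    assert (Hj : forall p, Nat.iter p (T k) x = 0 ->
      exists j, Nat.iter j (T k) x <> 0 /\ Nat.iter (S j) (T k) x = 0).
    { induction p; intro Hp.
      - simpl in Hp. lra.
      - destruct (Req_dec (Nat.iter p (T k) x) 0) as [E|E]; auto. exists p. auto. }
    destruct (Hj n Hz) as [j [Hj1 Hj2]].
    simpl in Hj2. pose proof (iter_range k x j Hx') as Hy.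
    destruct (greedy_step k _ Hk2 Hy) as [Hdk Hstep].
    rewrite Hstep in Hj2.
    set (dd := Z.to_nat (Int_part (INR k * Nat.iter j (T k) x))) in *.
    set (y := Nat.iter j (T k) x) in *.
    assert (Hyd : y = INR dd / INR k) by (replace (INR dd) with (INR k * y) by lra; field; lra).
    assert (Hdd0 : dd <> 0%nat) by (intro E; rewrite E in Hyd; simpl in Hyd; apply Hj1; rewrite Hyd; unfold Rdiv; ring).
    assert (Hd1 : 1 <= INR dd) by (apply (le_INR 1); lia).
    assert (Hd2 : INR dd <= INR k - 1) by (apply dig_le; auto).
    apply (HW j). fold y. split.
    + destruct Ha as [_ Ha]. rewrite Hyd. unfold Rdiv in *.
      assert (0 < / INR k) by (apply Rinv_0_lt_compat; lra). nra.
    + destruct Hb as [Hb _]. rewrite Hyd. unfold Rdiv in *.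
      assert (0 < / INR k) by (apply Rinv_0_lt_compat; lra). nra.
Qed.

Theorem mainTheorem7 (k : nat) (a b : R) :
  (3 <= k)%nat ->
  0 <= a < 1 / INR k ->
  (INR k - 1) / INR k < b <= 1 ->
  (forall x : R, Wset k a b x -> Cset k x) /\
  (forall x : R, (0 <= x <= 1)%R -> Wset 2 (g k a) (g k b) (g k x) -> ~ Bset k x) /\
  (forall x : R, Wset k a b x <-> (Cset k x /\ ((0 <= x <= 1)%R /\ Wset 2 (g k a) (g k b) (g k x)))).
Proof.
  intros Hk Ha Hb.
  assert (PA : forall x : R, Wset k a b x -> Cset k x).
  { intros x Hw. pose proof Hw as [Hx _]. split; [lra|]. exists (gd k x). split.
    - apply greedy_exp; auto. lia.
    - apply (greedy_ext k a b x); auto. lra. }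
  split; [exact PA|]. split.
  - intros x Hx HW2. apply (part_b k a b x); auto.
  - intro x. split.
    + intro Hw. split; [apply PA; auto|]. pose proof Hw as [Hx _]. split; [lra|].
      apply part_fwd; auto.
    + intros [HC [_ HW2]]. apply part_bwd; auto.
Qed.
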